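(* A random joint choice rule $p$ on a finite set $X$ is consistent with consumption dependent random utility if and only if it satisfies complete monotonicity and marginality.
   Context: $X$ is finite, $\mathcal{X}$ the nonempty subsets of $X$, $\mathcal{L}(X)$ the linear orders on $X$, $N(x,A)=\{\succ: x\succ y\ \forall y\in A\setminus\{x\}\}$. A random joint choice rule assigns to each $A,B\in\mathcal{X}$ and $(x,y)\in A\times B$ a number $p(x,y,A,B)\ge0$ with $\sum_{x\in A}\sum_{y\in B}p(x,y,A,B)=1$. Its Möbius inverse $q$ is defined by $p(x,y,A,B)=\sum_{A\subseteq A'\subseteq X}\sum_{B\subseteq B'\subseteq X}q(x,y,A',B')$. $p$ is consistent with consumption dependent random utility if there exist $\nu\in\Delta(\mathcal{L}(X))$ and a transition function $t:X\times\mathcal{L}(X)\to\Delta(\mathcal{L}(X))$ (writing $t_{\succ'}(x,\succ)$ for the probability of $\succ'$) with $p(x,y,A,B)=\sum_{\succ\in N(x,A)}\sum_{\succ'\in N(y,B)}\nu(\succ)t_{\succ'}(x,\succ)$ for all $A,B\in\mathcal{X}$, $(x,y)\in A\times B$. Complete monotonicity: $q(x,y,A,B)\ge 0$ for all $A,B\in\mathcal{X}$, $(x,y)\in A\times B$. Marginality: for all $A,B,C\in\mathcal{X}$ and $x\in A$, $\sum_{y\in B}p(x,y,A,B)=\sum_{y\in C}p(x,y,A,C)$. *)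

(* Defs.v *)
From HB Require Import structures.
From mathcomp Require Import all_boot all_order all_algebra.
From mathcomp Require Import reals.
Set Implicit Arguments. Unset Strict Implicit. Unset Printing Implicit Defensive.
Import Order.TTheory GRing.Theory Num.Theory.
Local Open Scope ring_scope.

(* A (strict) linear order on X, encoded by its graph f (x,y) = "x ≻ y". *)
Definition is_linord (X : finType) (f : {ffun X * X -> bool}) : bool :=
  [&& [forall x, ~~ f (x, x)],
      [forall x, forall y, forall z, f (x, y) && f (y, z) ==> f (x, z)] &
      [forall x, forall y, (x != y) ==> f (x, y) || f (y, x)]].

Definition linord (X : finType) := {f : {ffun X * X -> bool} | is_linord f}.

Definition lgt (X : finType) (s : linord X) (x y : X) : bool := val s (x, y).

Definition Nset (X : finType) (x : X) (A : {set X}) : pred (linord X) :=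
  fun s => [forall y in A, (y != x) ==> lgt s x y].

(* A random joint choice rule: p x y A B, meaningful for nonempty A, B,
   x ∈ A, y ∈ B. *)
Definition is_rjcr (X : finType) (R : realType)
  (p : X -> X -> {set X} -> {set X} -> R) : Prop :=
  forall A B : {set X}, A != set0 -> B != set0 ->
    (forall x y, x \in A -> y \in B -> 0 <= p x y A B) /\
    \sum_(x in A) \sum_(y in B) p x y A B = 1.

(* Möbius inverse q of p (the unique solution of
   p(x,y,A,B) = Σ_{A ⊆ A'} Σ_{B ⊆ B'} q(x,y,A',B')), given explicitly. *)
Definition mobius (X : finType) (R : realType)
  (p : X -> X -> {set X} -> {set X} -> R) x y (A B : {set X}) : R :=
  \sum_(A' : {set X} | A \subset A') \sum_(B' : {set X} | B \subset B')
     (-1) ^+ (#|A' :\: A| + #|B' :\: B|) * p x y A' B'.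

Definition complete_monotonicity (X : finType) (R : realType)
  (p : X -> X -> {set X} -> {set X} -> R) : Prop :=
  forall A B : {set X}, A != set0 -> B != set0 ->
    forall x y, x \in A -> y \in B -> 0 <= mobius p x y A B.

Definition marginality (X : finType) (R : realType)
  (p : X -> X -> {set X} -> {set X} -> R) : Prop :=
  forall A B C : {set X}, A != set0 -> B != set0 -> C != set0 ->
    forall x, x \in A ->
      \sum_(y in B) p x y A B = \sum_(y in C) p x y A C.

Definition cdru_consistent (X : finType) (R : realType)
  (p : X -> X -> {set X} -> {set X} -> R) : Prop :=
  exists (nu : linord X -> R) (t : X -> linord X -> linord X -> R),
    (forall s, 0 <= nu s) /\ \sum_s nu s = 1 /\
    (forall x s s', 0 <= t x s s') /\
    (forall x s, \sum_s' t x s s' = 1) /\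
    (forall A B : {set X}, A != set0 -> B != set0 ->
      forall x y, x \in A -> y \in B ->
        p x y A B = \sum_(s | Nset x A s) \sum_(s' | Nset y B s')
                      nu s * t x s s').

(* Main.v *)
Require Import Defs.
From HB Require Import structures.
From mathcomp Require Import all_boot all_order all_algebra.
From mathcomp Require Import reals.
From mathcomp Require Import zify ring lra.
Set Implicit Arguments. Unset Strict Implicit. Unset Printing Implicit Defensive.
Import Order.TTheory GRing.Theory Num.Theory.
Local Open Scope ring_scope.

Section Mob.
Variables (T : finType) (R : realType).
Implicit Types (f g : {set T} -> R) (A B : {set T}).

Lemma sign_interval (A B : {set T}) :
  \sum_(J : {set T} | (A \subset J) && (J \subset B)) (-1) ^+ #|J :\: A| = ((A == B)%:R : R).
Proof.
pose F := fun i => (if i \in A then (if i \in B then 1 else 0) else if i \in B then -1 else 0) : R.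
pose G := fun i => (if i \in A then 0 else 1) : R.
have := @bigA_distr R 0 1 *%R +%R T F G.
have -> : \prod_i (F i + G i) = (A == B)%:R.
  case: (boolP [exists i, (i \in A) != (i \in B)]) => [/existsP [i Hi]|].
    rewrite (bigD1 i) //= [F i + G i](_ : _ = 0) ?mul0r; last first.
      rewrite /F /G; move: Hi; case: (i \in A); case: (i \in B) => //= _; by rewrite ?addr0 ?addNr.
    case: eqP => // AB; move: Hi; by rewrite AB eqxx.
  move=> /existsPn H.
  have AB : A = B by apply/setP => i; have := H i; by case: (i \in A); case: (i \in B).
  rewrite AB eqxx big1 // => i _; rewrite /F /G AB.
  by case: (i \in B); rewrite ?addr0 ?add0r.
move=> ->; rewrite [LHS]big_mkcond /=; apply: eq_big => [J|J _]; first by rewrite ?inE.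
symmetry; case: ifP => [/andP [AJ JB]|].
  rewrite -prodr_const [RHS]big_mkcond /=; apply: eq_bigr => i _.
  rewrite /F /G !inE.
  case iJ: (i \in J); case iA: (i \in A) => //=.
  - by rewrite (subsetP JB _ iJ).
  - by rewrite (subsetP JB _ iJ).
  - by rewrite (subsetP AJ _ iA) in iJ.
move=> /negbT; rewrite negb_and => /orP [/subsetPn [i iA niJ]|/subsetPn [i iJ niB]].
  by rewrite (bigD1 i) //= (negbTE niJ) /G iA mul0r.
rewrite (bigD1 i) //= iJ /F (negbTE niB).
by case: (i \in A); rewrite mul0r.
Qed.

Definition mob (f : {set T} -> R) (A : {set T}) : R :=
  \sum_(A' : {set T} | A \subset A') (-1) ^+ #|A' :\: A| * f A'.

Lemma eq_mob f g A : (forall A', A \subset A' -> f A' = g A') -> mob f A = mob g A.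
Proof. by move=> H; apply: eq_bigr => A' HA; rewrite H. Qed.

Lemma mob_sum (I : finType) (F : I -> {set T} -> R) A :
  mob (fun A' => \sum_i F i A') A = \sum_i mob (F i) A.
Proof.
rewrite /mob exchange_big /=; apply: eq_bigr => A' _; by rewrite mulr_sumr.
Qed.

Lemma mob_sumP (I : finType) (P : pred I) (F : I -> {set T} -> R) A :
  mob (fun A' => \sum_(i | P i) F i A') A = \sum_(i | P i) mob (F i) A.
Proof.
rewrite /mob exchange_big /=; apply: eq_bigr => A' _; by rewrite mulr_sumr.
Qed.

Lemma mob_scale c f A : mob (fun A' => c * f A') A = c * mob f A.
Proof.
rewrite /mob mulr_sumr; apply: eq_bigr => A' _; by rewrite mulrCA.
Qed.

Lemma exchange_sup (H : {set T} -> {set T} -> R) A :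
  \sum_(A' : {set T} | A \subset A') \sum_(A'' : {set T} | A' \subset A'') H A' A'' =
  \sum_(A'' : {set T} | A \subset A'') \sum_(A' : {set T} | (A \subset A') && (A' \subset A'')) H A' A''.
Proof.
rewrite (exchange_big_dep (fun A'' => A \subset A'')) /=; last first.
  by move=> A' A'' HA HA'; apply: subset_trans HA HA'.
by apply: eq_bigr => A'' _; apply: eq_bigl => A'; rewrite andbC.
Qed.

Lemma mobK1 f g A : (forall A', A \subset A' -> f A' = \sum_(A'' : {set T} | A' \subset A'') g A'') ->
  mob f A = g A.
Proof.
move=> H; rewrite /mob.
rewrite (eq_bigr (fun A' => \sum_(A'' : {set T} | A' \subset A'') (-1) ^+ #|A' :\: A| * g A'')); last first.
  by move=> A' HA; rewrite H // mulr_sumr.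
rewrite exchange_sup.
rewrite (eq_bigr (fun A'' => (A == A'')%:R * g A'')); last first.
  by move=> A'' _; rewrite -sign_interval mulr_suml.
rewrite (bigD1 A) //= eqxx mul1r big1 ?addr0 // => A'' /andP [_ /negbTE].
by rewrite eq_sym => ->; rewrite mul0r.
Qed.

Lemma sign_interval2 (A B : {set T}) :
  \sum_(J : {set T} | (A \subset J) && (J \subset B)) (-1) ^+ #|B :\: J| = ((A == B)%:R : R).
Proof.
case AB: (A \subset B); last first.
  rewrite big_pred0 //; last first.
    move=> J; apply/negbTE; apply/negP => /andP [h1 h2].
    by rewrite (subset_trans h1 h2) in AB.
  by case: eqP AB => // ->; rewrite subxx.
transitivity (\sum_(J : {set T} | (A \subset J) && (J \subset B)) ((-1) ^+ #|B :\: A| * (-1) ^+ #|J :\: A|) : R).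
  apply: eq_bigr => J /andP [AJ JB].
  have -> : #|B :\: A| = (#|B :\: J| + #|J :\: A|)%N.
    rewrite !cardsD (setIidPr AB) (setIidPr JB) (setIidPr AJ).
    have := subset_leq_card AJ; have := subset_leq_card JB; lia.
  by rewrite exprD -mulrA -expr2 sqrr_sign mulr1.
rewrite -mulr_sumr sign_interval.
by case: eqP => [->|_]; rewrite ?mulr0 // setDv cards0 expr0 mul1r.
Qed.

Lemma mobK2 f A : \sum_(A' : {set T} | A \subset A') mob f A' = f A.
Proof.
rewrite /mob exchange_sup.
rewrite (eq_bigr (fun A'' => (A == A'')%:R * f A'')); last first.
  by move=> A'' _; rewrite -sign_interval2 mulr_suml.
rewrite (bigD1 A) //= eqxx mul1r big1 ?addr0 // => A'' /andP [_ /negbTE].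
by rewrite eq_sym => ->; rewrite mul0r.
Qed.

Lemma mob_setT f : mob f setT = f setT.
Proof.
rewrite /mob (big_pred1 setT) ?setDv ?cards0 ?expr0 ?mul1r // => A.
by rewrite subTset.
Qed.

End Mob.

Section Falm.
Variables (T : finType) (R : realType) (r : T -> {set T} -> R).
Hypothesis hr0 : forall x (A : {set T}), x \in A -> 0 <= r x A.
Implicit Types (C D : {set T}) (l : seq T).
Hypothesis hP : forall A : {set T}, A != set0 ->
  \sum_(x in A) \sum_(A' : {set T} | A \subset A') r x A' = 1.

Lemma setU1_neq z C : z |: C != set0.
Proof. by apply/set0Pn; exists z; rewrite setU11. Qed.

Definition Kin (C : {set T}) := \sum_(x in C) r x C.
Definition Kout (C : {set T}) := \sum_(z in ~: C) r z (z |: C).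

Lemma Kout_ge0 C : 0 <= Kout C.
Proof. by apply: sumr_ge0 => z _; apply: hr0; rewrite setU11. Qed.

Lemma r_le_Kin x C : x \in C -> r x C <= Kin C.
Proof.
move=> xC; rewrite /Kin (bigD1 x) //= lerDl; apply: sumr_ge0 => y /andP [yC _].
exact: hr0.
Qed.

Lemma r_le_Kout z C : z \notin C -> r z (z |: C) <= Kout C.
Proof.
move=> zC; rewrite /Kout (bigD1 z) ?inE //= lerDl; apply: sumr_ge0 => y _.
by apply: hr0; rewrite setU11.
Qed.

Lemma sum_indic (g : {set T} -> R) B : \sum_(A' : {set T}) g A' * (B == A')%:R = g B.
Proof.
rewrite (bigD1 B) //= eqxx mulr1 big1 ?addr0 // => A' /negbTE.
by rewrite eq_sym => ->; rewrite mulr0.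
Qed.

Lemma flow C : Kin C - Kout C = (C == setT)%:R - (C == set0)%:R.
Proof.
pose TT D := \sum_(x in D) \sum_(A' : {set T} | D \subset A') r x A'.
have HT : forall D, TT D = 1 - (D == set0)%:R.
  move=> D; case: eqP => [->|/eqP D0]; last by rewrite subr0 /TT hP.
  by rewrite /TT big_set0 subrr.
have E1 : mob TT C = (C == setT)%:R - (C == set0)%:R.
  rewrite /mob; under eq_bigr => D _ do rewrite HT mulrBr mulr1.
  rewrite sumrB; congr (_ - _).
    rewrite -sign_interval; apply: eq_bigl => D; by rewrite subsetT andbT.
  case: eqP => [->|/eqP C0].
    rewrite (bigD1 set0) ?sub0set //= eqxx setD0 cards0 expr0 mulr1 big1 ?addr0 //.
    by move=> D /andP [_ /negbTE ->]; rewrite mulr0.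
  rewrite big1 // => D CD; case: eqP => [D0|]; last by rewrite mulr0.
  by move: CD; rewrite D0 subset0 => /eqP C0'; rewrite C0' eqxx in C0.
have E2 : mob TT C = Kin C - Kout C.
  transitivity (\sum_x \sum_(A' : {set T}) r x A' *
     \sum_(D : {set T} | (C \subset D) && (x \in D) && (D \subset A')) (-1) ^+ #|D :\: C|).
    rewrite /mob /TT.
    have step : forall x (A' : {set T}), r x A' *
       \sum_(D : {set T} | (C \subset D) && (x \in D) && (D \subset A')) (-1) ^+ #|D :\: C| =
       \sum_(D : {set T}) (if (C \subset D) && (x \in D) && (D \subset A') then
                            (-1) ^+ #|D :\: C| * r x A' else 0).
      by move=> x A'; rewrite mulr_sumr big_mkcond; apply: eq_bigr => D _; case: ifP; rewrite // mulrC.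
    rewrite [RHS](eq_bigr _ (fun x _ => eq_bigr _ (fun A' _ => step x A'))).
    under [RHS]eq_bigr => x _ do rewrite exchange_big /=.
    rewrite [RHS]exchange_big /= big_mkcond /=; apply: eq_bigr => D _.
    case CD: (C \subset D) => /=; last by rewrite big1 // => x _; rewrite big1.
    rewrite mulr_sumr big_mkcond /=; apply: eq_bigr => x _.
    case: (x \in D) => /=; last by rewrite big1.
    rewrite mulr_sumr big_mkcond /=; apply: eq_bigr => A' _.
    by case: (D \subset A'); rewrite // mulrC.
  transitivity (\sum_x (if x \in C then r x C else - r x (x |: C))).
    apply: eq_bigr => x _; case xC: (x \in C).
      rewrite -[RHS](sum_indic (r x) C); apply: eq_bigr => A' _; congr (_ * _).
      rewrite -sign_interval; apply: eq_bigl => D.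
      by case CD: (C \subset D); rewrite //= (subsetP CD _ xC).
    rewrite -(sum_indic (r x) (x |: C)) -sumrN; apply: eq_bigr => A' _.
    rewrite -mulrN; congr (_ * _); rewrite -sign_interval -sumrN.
    have E : forall D : {set T}, (C \subset D) && (x \in D) = (x |: C \subset D).
      by move=> D; rewrite subUset sub1set andbC.
    under eq_bigl => D do rewrite E.
    apply: eq_bigr => D /andP [xCD _].
    have xD : x \in D by apply: (subsetP xCD); rewrite setU11.
    have -> : #|D :\: C| = (#|D :\: (x |: C)|).+1.
      by rewrite (cardsD1 x (D :\: C)) !inE xC xD /= add1n setDDl [C :|: _]setUC.
    by rewrite exprS mulN1r.
  rewrite (bigID (mem C)) /=; congr (_ + _).
    by apply: eq_bigr => x ->.
  rewrite /Kout -sumrN; apply: eq_big => [x|x]; first by rewrite inE.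
  by move=> /negbTE ->.
by rewrite -E2 E1.
Qed.

Fixpoint w (C : {set T}) (l : seq T) : R :=
  if l is z :: l' then (z \notin C)%:R * (r z (z |: C) / Kout C) * w (z |: C) l' else 1.

Lemma set_nil : [set y in ([::] : seq T)] = set0.
Proof. by apply/setP => y; rewrite !inE. Qed.

Lemma w_cat C l1 l2 : w C (l1 ++ l2) = w C l1 * w (C :|: [set y in l1]) l2.
Proof.
elim: l1 C => [|z l1 IH] C /=; first by rewrite set_nil setU0 mul1r.
rewrite IH !mulrA; congr (_ * _); congr (w _ _); apply/setP => y; rewrite !inE.
by case: (y == z); case: (y \in C); case: (y \in l1).
Qed.

Lemma w_ge0 C l : 0 <= w C l.
Proof.
elim: l C => [|z l IH] C /=; first exact: ler01.
apply: mulr_ge0 => //; apply: mulr_ge0; first by case: (z \notin C).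
apply: divr_ge0; [by apply: hr0; rewrite setU11 | exact: Kout_ge0].
Qed.

Lemma w_nz C l : w C l != 0 -> uniq l && all (fun z => z \notin C) l.
Proof.
elim: l C => [|z l IH] C //= Hnz.
have zC : z \notin C.
  by apply: contraNN Hnz => zC; rewrite zC !mul0r.
have H1 : w (z |: C) l != 0 by apply: contraNN Hnz => /eqP ->; rewrite mulr0.
have := IH (z |: C) H1.
move=> /andP [u a]; rewrite u zC /= andbT; apply/andP; split.
  by apply/negP => zl; have := allP a z zl; rewrite !inE eqxx.
by apply/allP => y yl; have := allP a y yl; rewrite !inE negb_or => /andP [_ ->].
Qed.

Fixpoint sumseq (k : nat) (F : seq T -> R) : R :=
  if k is k'.+1 then \sum_z sumseq k' (fun l => F (z :: l)) else F [::].

Lemma sumseq_ext k F G : (forall l, size l = k -> F l = G l) -> sumseq k F = sumseq k G.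
Proof.
elim: k F G => [|k IH] F G H /=; first exact: H.
by apply: eq_bigr => z _; apply: IH => l Hl; apply: H; rewrite /= Hl.
Qed.

Lemma sumseq_cat k1 k2 F :
  sumseq (k1 + k2) F = sumseq k1 (fun l1 => sumseq k2 (fun l2 => F (l1 ++ l2))).
Proof.
elim: k1 F => [|k1 IH] F //=.
apply: eq_bigr => z _; exact: IH.
Qed.

Lemma sumseq_sum k (I : finType) (P : pred I) (F : I -> seq T -> R) :
  sumseq k (fun l => \sum_(i | P i) F i l) = \sum_(i | P i) sumseq k (F i).
Proof.
elim: k F => [|k IH] F //=.
under eq_bigr => z _ do rewrite (IH (fun i l => F i (z :: l))).
by rewrite exchange_big.
Qed.

Lemma sumseq_scale k c F : sumseq k (fun l => c * F l) = c * sumseq k F.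
Proof.
elim: k F => [|k IH] F //=.
rewrite mulr_sumr; apply: eq_bigr => z _; exact: IH.
Qed.

Lemma sumseq_scaler k c F : sumseq k (fun l => F l * c) = sumseq k F * c.
Proof.
rewrite mulrC -sumseq_scale; apply: sumseq_ext => l _; exact: mulrC.
Qed.

Lemma card_setCU1 z C : z \notin C -> #|~: (z |: C)| = (#|~: C|).-1.
Proof.
move=> zC; have h1 := cardsC (z |: C); have h2 := cardsC C.
rewrite cardsU1 zC /= in h1. move: h1 h2. set a := #|C|. set b := #|~: C|. set c := #|~: (z |: C)|. set d := #|T|. lia.
Qed.

Lemma live k C : #|~: C| = k -> (C = setT \/ 0 < Kout C) -> sumseq k (w C) = 1.
Proof.
elim: k C => [|k IH] C Hc Hl //=.
have CT : C != setT.
  by apply/eqP => CT; rewrite CT setCT cards0 in Hc.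
have KC : 0 < Kout C by case: Hl => // CT'; rewrite CT' eqxx in CT.
transitivity (\sum_z (z \notin C)%:R * (r z (z |: C) / Kout C)).
  apply: eq_bigr => z _; rewrite sumseq_scale.
  case zC: (z \in C) => /=; first by rewrite !mul0r.
  have [->|rnz] := eqVneq (r z (z |: C)) 0; first by rewrite mul0r !mulr0 mul0r.
  rewrite IH ?mulr1 //.
    by rewrite card_setCU1 ?zC // Hc.
  case: (eqVneq (z |: C) setT) => [->|zCT]; first by left.
  right; have := flow (z |: C).
  rewrite (negbTE zCT) (negbTE (setU1_neq _ _)) subrr => /eqP; rewrite subr_eq0 => /eqP <-.
  apply: lt_le_trans (r_le_Kin (setU11 _ _)).
  by rewrite lt_neqAle eq_sym rnz hr0 // setU11.
rewrite -[RHS](divff (lt0r_neq0 KC)) /Kout mulr_suml [RHS]big_mkcond /=.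
apply: eq_bigr => z _; rewrite inE; by case: (z \in C); rewrite /= ?mul0r ?mul1r.
Qed.



Lemma full_of_uniq l : uniq l -> size l = #|T| -> forall x, x \in l.
Proof.
move=> u s x; apply/negPn/negP => nx.
have U : uniq (x :: l) by rewrite /= nx u.
have := max_card (mem (x :: l)).
by rewrite (card_uniqP U) /= s ltnn.
Qed.

Lemma take_at_x x l1 l2 : x \notin l1 ->
  [set y in take (index x (l1 ++ x :: l2)).+1 (l1 ++ x :: l2)] = x |: [set y in l1].
Proof.
move=> xl1; rewrite index_cat (negbTE xl1) /= eqxx addn0 take_cat ltnNge leqnSn /= subSnn.
by rewrite take_cons take0; apply/setP => y; rewrite !inE mem_cat inE orbC.
Qed.

Lemma Lset_cat x z l1 l2 (A : {set T}) : x \in A -> uniq (l1 ++ z :: l2) ->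
  size (l1 ++ z :: l2) = #|T| -> size l1 = #|A :\ x| ->
  ([set y in take (index x (l1 ++ z :: l2)).+1 (l1 ++ z :: l2)] == A) =
  (z == x) && ([set y in l1] == A :\ x).
Proof.
move=> xA u sz s1.
have xl1 : z = x -> x \notin l1.
  move=> zx; move: u; rewrite cat_uniq => /and3P [_ + _].
  by rewrite zx /= negb_or => /andP [].
apply/eqP/andP => [E|[/eqP zx /eqP SE]]; last first.
  by rewrite zx take_at_x ?xl1 // SE setD1K.
set l := l1 ++ z :: l2 in E u sz.
have xl : x \in l := full_of_uniq u sz x.
have Hi : index x l = size l1.
  have := congr1 (fun S : {set T} => #|S|) E; rewrite /= cardsE.
  rewrite (card_uniqP (take_uniq _ u)) size_takel; last by rewrite index_mem.
  by rewrite (cardsD1 x A) xA s1 add1n => [[]].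
have zx : z = x.
  have := nth_index x xl; rewrite Hi /l nth_cat ltnn subnn /=.
  done.
split; first by rewrite zx.
move: E; rewrite /l zx take_at_x ?xl1 // => <-.
by rewrite setU1K ?inE ?xl1.
Qed.

Lemma reach_step (S D : {set T}) z (c : R) :
  (z \notin S)%:R * (r z (z |: S) / Kout S) * c * (z |: S == D)%:R =
  (if z \in D then r z D / Kout (D :\ z) * (c * (S == D :\ z)%:R) else 0).
Proof.
case zS: (z \in S) => /=.
  rewrite !mul0r; case: ifP => // zD; case: eqP; rewrite ?mulr0 // => SE.
  by rewrite SE !inE eqxx in zS.
case: eqP => [<-|neq]; first by rewrite setU11 setU1K ?zS // eqxx !mulr1 mul1r.
rewrite mulr0; case: ifP => // zD; case: eqP; rewrite ?mulr0 // => SE.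
by case: neq; rewrite SE setD1K.
Qed.

Lemma DT_false z D : (D :\ z == setT) = false.
Proof. by apply/negbTE/eqP => E; have := setD11 z D; rewrite E inE. Qed.

Lemma Kin_Kout_D z D : ((D :\ z) == set0)%:R + Kin (D :\ z) = Kout (D :\ z).
Proof. have := flow (D :\ z); rewrite DT_false /= => F; lra. Qed.

Lemma reach k D : #|D| = k ->
  sumseq k (fun l => w set0 l * ([set y in l] == D)%:R) = (D == set0)%:R + Kin D.
Proof.
elim: k D => [|k IH] D HD.
  move/eqP: HD; rewrite cards_eq0 => /eqP ->.
  by rewrite /= set_nil eqxx /Kin big_set0 mul1r addr0.
have D0 : D != set0 by apply/eqP => D0; rewrite D0 cards0 in HD.
rewrite -addn1 sumseq_cat.
transitivity (sumseq k (fun l1 => \sum_(z in D) r z D / Kout (D :\ z) *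
                 (w set0 l1 * ([set y in l1] == D :\ z)%:R))).
  apply: sumseq_ext => l1 _ /=; rewrite [RHS]big_mkcond; apply: eq_bigr => z _.
  have -> : [set y in l1 ++ [:: z]] = z |: [set y in l1].
    by apply/setP => y; rewrite !inE mem_cat inE orbC.
  by rewrite -reach_step w_cat set0U /=; ring.
rewrite sumseq_sum (negbTE D0) add0r /Kin; apply: eq_bigr => z zD.
rewrite sumseq_scale IH; last by move: HD; rewrite (cardsD1 z D) zD add1n => [[]].
rewrite Kin_Kout_D.
have [K0|K0] := eqVneq (Kout (D :\ z)) 0; last by rewrite divfK.
have : r z D <= 0 by rewrite -K0 -{1}(setD1K zD) r_le_Kout // setD11.
move=> h; have h' := hr0 zD; have -> : r z D = 0 by apply/eqP; rewrite eq_le h h'.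
by rewrite !mul0r.
Qed.

Lemma hit_point x (A : {set T}) z l1 l2 : x \in A -> size l1 = #|A :\ x| ->
  size (l1 ++ z :: l2) = #|T| ->
  w set0 (l1 ++ z :: l2) * ([set y in take (index x (l1 ++ z :: l2)).+1 (l1 ++ z :: l2)] == A)%:R
  = (w set0 l1 * ([set y in l1] == A :\ x)%:R) * ((z == x)%:R * (r x A / Kout (A :\ x))) * w A l2.
Proof.
move=> xA s1 sz.
rewrite w_cat set0U /=; set S := [set y in l1].
have [->|nz1] := eqVneq (w set0 l1) 0; first by rewrite !mul0r.
case zS: (z \in S) => /=.
  rewrite !mul0r mulr0 mul0r; case: (z =P x) => [zx|_]; last by rewrite !(mul0r, mulr0).
  case: (S =P A :\ x) => [SE|_]; last by rewrite !(mul0r, mulr0).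
  by rewrite SE zx !inE eqxx in zS.
have [nz2|nz2] := eqVneq (w (z |: S) l2) 0.
  rewrite nz2 !mulr0 mul0r; case: (z =P x) => [zx|_]; last by rewrite !(mul0r, mulr0).
  case: (S =P A :\ x) => [SE|_]; last by rewrite !(mul0r, mulr0).
  by rewrite [w A l2](_ : _ = 0) ?mulr0 // -(setD1K xA) -SE -zx.
have /andP [u1 _] := w_nz nz1.
have /andP [u2 a2] := w_nz nz2.
have zl1 : z \notin l1 by move: zS; rewrite /S inE => ->.
have l2l1 : ~~ has (mem l1) l2.
  apply/hasPn => y yl2; have := allP a2 y yl2; rewrite !inE negb_or => /andP [_ ->] //.
have zl2 : z \notin l2.
  by apply/negP => zl2; have := allP a2 z zl2; rewrite !inE eqxx.
have u : uniq (l1 ++ z :: l2).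
  by rewrite cat_uniq u1 /= u2 zl2 andbT negb_or zl1 l2l1.
rewrite (Lset_cat xA u sz s1).
case: (z =P x) => [zx|_]; last by rewrite /= !(mul0r, mulr0).
case: (S =P A :\ x) => [SE|_]; last by rewrite /= !(mul0r, mulr0).
rewrite /= zx SE setD1K //; ring.
Qed.

Lemma sum_eqx x (c : R) : \sum_(z : T) (z == x)%:R * c = c.
Proof.
rewrite (bigD1 x) //= eqxx mul1r big1 ?addr0 // => z /negbTE ->; exact: mul0r.
Qed.

Lemma hit x (A : {set T}) : x \in A ->
  sumseq #|T| (fun l => w set0 l * ([set y in take (index x l).+1 l] == A)%:R) = r x A.
Proof.
move=> xA.
have HN : #|T| = (#|A :\ x| + (1 + #|~: A|))%N.
  have := cardsC A; have := cardsD1 x A; rewrite xA /=; lia.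
rewrite [in sumseq _]HN sumseq_cat.
transitivity (sumseq #|A :\ x| (fun l1 => (w set0 l1 * ([set y in l1] == A :\ x)%:R) *
    (r x A / Kout (A :\ x)) * sumseq #|~: A| (w A))).
  apply: sumseq_ext => l1 s1; rewrite sumseq_cat /=.
  transitivity (\sum_z (w set0 l1 * ([set y in l1] == A :\ x)%:R) *
       ((z == x)%:R * (r x A / Kout (A :\ x))) * sumseq #|~: A| (w A)).
    apply: eq_bigr => z _; rewrite -sumseq_scale; apply: sumseq_ext => l2 s2.
    by rewrite hit_point // size_cat /= s1 s2 HN.
  rewrite -big_distrl /= -big_distrr /= sum_eqx //.
rewrite sumseq_scaler sumseq_scaler reach // Kin_Kout_D.
have [->|rnz] := eqVneq (r x A) 0; first by rewrite mul0r mulr0 mul0r.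
have rpos : 0 < r x A by rewrite lt_neqAle eq_sym rnz hr0.
have Kpos : 0 < Kout (A :\ x).
  by apply: lt_le_trans rpos _; rewrite -{1}(setD1K xA) r_le_Kout // setD11.
rewrite (live (k := #|~: A|)) //; last first.
  case: (eqVneq A setT) => [->|AT]; first by left.
  right; have := flow A; rewrite (negbTE AT).
  have -> : (A == set0) = false by apply/negbTE/set0Pn; exists x.
  rewrite subrr => /eqP; rewrite subr_eq0 => /eqP <-.
  exact: lt_le_trans rpos (r_le_Kin xA).
by rewrite mulr1 mulrC divfK // lt0r_neq0.
Qed.
End Falm.

Section Lin.
Variables (T : finType) (R : realType).
Implicit Types (l : seq T) (s : linord T).

Definition rawf l : {ffun T * T -> bool} := [ffun p => (index p.2 l < index p.1 l)%N].

Lemma index_inj_mem l x y : x \in l -> index x l = index y l -> x = y.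
Proof.
move=> xl E; have yl : y \in l by rewrite -index_mem -E index_mem.
by rewrite -(nth_index x xl) E nth_index.
Qed.

Lemma rawf_lin l : (forall x, x \in l) -> is_linord (rawf l).
Proof.
move=> full; apply/and3P; split.
- by apply/forallP => x; rewrite ffunE /= ltnn.
- apply/forallP => x; apply/forallP => y; apply/forallP => z; rewrite !ffunE /=.
  by apply/implyP => /andP [h1 h2]; apply: ltn_trans h2 h1.
- apply/forallP => x; apply/forallP => y; apply/implyP => nxy; rewrite !ffunE /=.
  rewrite orbC -neq_ltn; apply/eqP => E; move/eqP: nxy; apply.
  exact: index_inj_mem (full x) E.
Qed.

Definition ord0 : linord T := exist _ (rawf (enum T)) (rawf_lin (fun x => mem_enum T x)).

Definition ord_of l : linord T := insubd ord0 (rawf l).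

Lemma lgt_ord_of l x y : (forall z, z \in l) ->
  lgt (ord_of l) x y = (index y l < index x l)%N.
Proof.
by move=> full; rewrite /lgt /ord_of insubdK ?ffunE //; apply: rawf_lin.
Qed.

Lemma lgt_irr s x : lgt s x x = false.
Proof.
by have := valP s; case/and3P => /forallP H _ _; apply/negbTE; apply: H.
Qed.

Lemma lgt_trans s x y z : lgt s x y -> lgt s y z -> lgt s x z.
Proof.
have := valP s; case/and3P => _ /forallP H _ h1 h2.
by have := H x => /forallP /(_ y) /forallP /(_ z) /implyP; apply; rewrite /lgt in h1 h2 *; rewrite h1 h2.
Qed.

Lemma lgt_total s x y : x != y -> lgt s x y || lgt s y x.
Proof.
have := valP s; case/and3P => _ _ /forallP H nxy.
by have := H x => /forallP /(_ y) /implyP; apply.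
Qed.

Definition le_s s : rel T := fun a b => (a == b) || lgt s b a.

Lemma le_s_trans s : transitive (le_s s).
Proof.
move=> y x z; rewrite /le_s => /orP [/eqP -> //|h1] /orP [/eqP <-|h2]; first by rewrite h1 orbT.
by rewrite (lgt_trans h2 h1) orbT.
Qed.

Lemma le_s_anti s : antisymmetric (le_s s).
Proof.
move=> x y; rewrite /le_s => /andP [/orP [/eqP //|h1] /orP [/eqP //|h2]].
by have := lgt_trans h1 h2; rewrite lgt_irr.
Qed.

Lemma le_s_total s : total (le_s s).
Proof.
move=> x y; rewrite /le_s; case: (eqVneq x y) => [->|nxy] //=.
by rewrite orbC; apply: lgt_total.
Qed.

Definition seq_of s := sort (le_s s) (enum T).

Lemma seq_of_uniq s : uniq (seq_of s).
Proof. by rewrite sort_uniq enum_uniq. Qed.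

Lemma seq_of_size s : size (seq_of s) = #|T|.
Proof. by rewrite size_sort cardE. Qed.

Lemma seq_of_mem s x : x \in seq_of s.
Proof. by rewrite mem_sort mem_enum. Qed.

Lemma ord_ofK s : ord_of (seq_of s) = s.
Proof.
apply: val_inj; rewrite /ord_of insubdK; last by apply: rawf_lin; exact: seq_of_mem.
apply/ffunP => [[a b]]; rewrite ffunE /=.
set l := seq_of s.
have st : sorted (le_s s) l := sort_sorted (@le_s_total s) _.
have al := seq_of_mem s a; have bl := seq_of_mem s b.
change (val s (a, b)) with (lgt s a b).
apply/idP/idP => H.
  have := sorted_ltn_index (@le_s_trans s) st b a bl al H; rewrite /le_s => /orP [/eqP E|//].
  by rewrite E ltnn in H.
have H2 : lgt s a b := H.
case: (ltngtP (index b l) (index a l)) => // H'.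
  have := sorted_ltn_index (@le_s_trans s) st a b al bl H'; rewrite /le_s => /orP [/eqP E|h].
    by rewrite E lgt_irr in H2.
  by have := lgt_trans H2 h; rewrite lgt_irr.
by have E := index_inj_mem bl H'; rewrite E lgt_irr in H2.
Qed.

Lemma seq_ofK l : uniq l -> size l = #|T| -> seq_of (ord_of l) = l.
Proof.
move=> u sz; have full := full_of_uniq u sz.
apply: (sorted_eq (@le_s_trans _) (@le_s_anti _)).
- exact: sort_sorted (@le_s_total _) _.
- case: l u sz full => [//|x0 l'] u sz full.
  apply: pairwise_sorted; apply/(pairwiseP x0) => i j; rewrite !inE => hi hj hij.
  rewrite /le_s lgt_ord_of // !index_uniq // hij orbT //.
- rewrite perm_sort; apply: uniq_perm => //; first exact: enum_uniq.
  by move=> y; rewrite mem_enum full.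
Qed.

Fixpoint allseq k : seq (seq T) :=
  if k is k'.+1 then [seq z :: l | z <- enum T, l <- allseq k'] else [:: [::]].

Lemma mem_allseq k l : (l \in allseq k) = (size l == k).
Proof.
elim: k l => [|k IH] [|z l] //=.
  apply/allpairsP => [[[a b] [_ _ //]]].
apply/allpairsP/idP => [[[a b] [/= _ bl [E1 E2]]]|H]; first by rewrite E2 eqSS -IH.
by exists (z, l); split; rewrite /= ?mem_enum ?IH // -eqSS.
Qed.

Lemma allseq_uniq k : uniq (allseq k).
Proof.
elim: k => [//|k IH] /=; apply: allpairs_uniq => //; first exact: enum_uniq.
by move=> [a b] [c d] _ _ /= [-> ->].
Qed.

Lemma sum_allseq k (F : seq T -> R) : \sum_(l <- allseq k) F l = sumseq k F.
Proof.
elim: k F => [|k IH] F /=; first by rewrite big_seq1.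
rewrite big_allpairs_dep big_enum /=; apply: eq_bigr => z _; exact: IH.
Qed.

Lemma sum_linord (G : linord T -> R) :
  \sum_s G s = \sum_(l <- allseq #|T| | uniq l) G (ord_of l).
Proof.
rewrite -[RHS]big_filter.
have BM := big_map ord_of xpredT G; rewrite /= in BM; rewrite -BM {BM} [RHS]big_uniq /=.
  apply: eq_bigl => s; apply/esym/mapP; exists (seq_of s); last by rewrite ord_ofK.
  by rewrite mem_filter seq_of_uniq mem_allseq seq_of_size eqxx.
rewrite map_inj_in_uniq ?filter_uniq ?allseq_uniq //.
move=> l1 l2; rewrite !mem_filter !mem_allseq => /andP [u1 /eqP s1] /andP [u2 /eqP s2] E.
by rewrite -(seq_ofK u1 s1) -(seq_ofK u2 s2) E.
Qed.

End Lin.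

Section FNuS.
Variables (T : finType) (R : realType) (r : T -> {set T} -> R).
Hypothesis hr0 : forall x (A : {set T}), x \in A -> 0 <= r x A.
Hypothesis hP : forall A : {set T}, A != set0 ->
  \sum_(x in A) \sum_(A' : {set T} | A \subset A') r x A' = 1.

Definition Lo (s : linord T) x : {set T} := x |: [set z | lgt s x z].
Definition FNu (s : linord T) : R := w r set0 (seq_of s).

Lemma FNu_ge0 s : 0 <= FNu s.
Proof. exact: w_ge0. Qed.

Lemma sum_FNu (G : linord T -> R) :
  \sum_s FNu s * G s = sumseq #|T| (fun l => w r set0 l * G (ord_of l)).
Proof.
rewrite sum_linord big_seq_cond.
transitivity (\sum_(l <- allseq T #|T| | (l \in allseq T #|T|) && uniq l) w r set0 l * G (ord_of l)).
  apply: eq_bigr => l /andP [lin u]; move: lin; rewrite mem_allseq => /eqP sz.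
  by rewrite /FNu seq_ofK.
rewrite -big_seq_cond big_mkcond /= -sum_allseq; apply: eq_bigr => l _.
case: ifP => // nu; case: (eqVneq (w r set0 l) 0) => [->|nz]; first by rewrite mul0r.
by have := w_nz nz; rewrite nu.
Qed.

Lemma FNu_sum : \sum_s FNu s = 1.
Proof.
have := sum_FNu (fun _ => 1).
rewrite (eq_bigr FNu) => [->|s _]; last by rewrite mulr1.
rewrite (sumseq_ext (G := w r set0)) => [|l _]; last by rewrite mulr1.
apply: (live hr0 hP); first by rewrite setC0 cardsT.
case: (eqVneq (set0 : {set T}) setT) => [E|NE]; first by left.
right; have := flow hP set0; rewrite (negbTE NE) eqxx /Kin big_set0 /= => F.
have -> : Kout r set0 = 1 by lra.
exact: ltr01.
Qed.

Lemma Lo_ord l x : uniq l -> size l = #|T| ->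
  Lo (ord_of l) x = [set y in take (index x l).+1 l].
Proof.
move=> u sz; have full := full_of_uniq u sz.
apply/setP => y; rewrite !inE lgt_ord_of // in_take // ltnS [RHS]leq_eqVlt.
case: (eqVneq y x) => [->|nyx]; first by rewrite !eqxx.
have -> : (index y l == index x l) = false.
  by apply/negbTE/eqP => E; move: nyx; rewrite (index_inj_mem (full y) E) eqxx.
by [].
Qed.

Lemma FNu_E x (A : {set T}) : x \in A -> \sum_(s | Lo s x == A) FNu s = r x A.
Proof.
move=> xA; rewrite big_mkcond /=.
transitivity (\sum_s FNu s * (Lo s x == A)%:R).
  by apply: eq_bigr => s _; case: ifP; rewrite ?mulr1 ?mulr0.
rewrite sum_FNu -(hit hr0 hP xA); apply: sumseq_ext => l sz.
case: (eqVneq (w r set0 l) 0) => [->|nz]; first by rewrite !mul0r.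
by have /andP [u _] := w_nz nz; rewrite Lo_ord.
Qed.

End FNuS.

Section Part.
Variables (T : finType) (R : realType).

Lemma Nset_Lo (s : linord T) x (A : {set T}) : Nset x A s = (A \subset Lo s x).
Proof.
apply/forallP/subsetP => [H y yA|H y]; first have := H y.
  by rewrite yA /=; rewrite !inE; case: (eqVneq y x) => //= _ ->.
apply/implyP => yA; apply/implyP => nyx; have := H y yA.
by rewrite !inE (negbTE nyx).
Qed.

Lemma partition_Lo (F : linord T -> R) x (A : {set T}) :
  \sum_(s | Nset x A s) F s = \sum_(A' : {set T} | A \subset A') \sum_(s | Lo s x == A') F s.
Proof.
rewrite (exchange_big_dep xpredT) //= [LHS]big_mkcond /=; apply: eq_bigr => s _.
rewrite Nset_Lo; case: (boolP (A \subset Lo s x)) => H.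
  rewrite (big_pred1 (Lo s x)) // => A' /=.
  by rewrite [A' == _]eq_sym; case: eqP => [<-|]; rewrite ?H ?andbF.
rewrite big_pred0 // => A'; case: eqP => [<-|]; by rewrite ?(negbTE H) ?andbF.
Qed.

Lemma uniq_max (s : linord T) (B : {set T}) : B != set0 ->
  \sum_(y in B) ((Nset y B s)%:R : R) = 1.
Proof.
case/set0Pn => y0 y0B.
set l := seq_of s.
have full : forall z, z \in l := seq_of_mem s.
have lgtE : forall a b, lgt s a b = (index b l < index a l)%N.
  by move=> a b; rewrite -{1}(ord_ofK s) lgt_ord_of.
case: (arg_maxnP (fun z => index z l) y0B) => m mB0 mmax.
have mB : m \in B := mB0.
have HN : forall y, y \in B -> Nset y B s = (y == m).
  move=> y yB; apply/forallP/eqP => [H|->].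
    apply/eqP; apply/negPn/negP => nym; have := H m; rewrite mB /= eq_sym nym /= lgtE.
    have hy : (index y l <= index m l)%N := mmax y yB.
    by rewrite ltnNge hy.
  move=> z; apply/implyP => zB; apply/implyP => nzm.
  have hz : (index z l <= index m l)%N := mmax z zB.
  rewrite lgtE ltn_neqAle hz andbT.
  by apply/eqP => E; move: nzm; rewrite (index_inj_mem (full z) E) eqxx.
rewrite (eq_bigr (fun y => (y == m)%:R)) => [|y yB]; last by rewrite HN.
rewrite (bigD1 m) //= eqxx big1 ?addr0 // => y /andP [_ /negbTE ->] //.
Qed.

End Part.

Lemma mobius_mob (R : realType) (X : finType) (p : X -> X -> {set X} -> {set X} -> R) x y A B :
  mobius p x y A B = mob (fun A' => mob (fun B' => p x y A' B') B) A.
Proof.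
rewrite /mobius /mob; apply: eq_bigr => A' _; rewrite mulr_sumr; apply: eq_bigr => B' _.
by rewrite exprD mulrA.
Qed.

Lemma nonempty_of (X : finType) x (A : {set X}) : x \in A -> A != set0.
Proof. by move=> xA; apply/set0Pn; exists x. Qed.

Section Forward.
Variables (R : realType) (X : finType) (p : X -> X -> {set X} -> {set X} -> R).
Variables (nu : linord X -> R) (t : X -> linord X -> linord X -> R).
Hypotheses (nu0 : forall s, 0 <= nu s) (t0 : forall x s s', 0 <= t x s s')
  (tsum : forall x s, \sum_s' t x s s' = 1)
  (Hp : forall A B : {set X}, A != set0 -> B != set0 ->
      forall x y, x \in A -> y \in B ->
        p x y A B = \sum_(s | Nset x A s) \sum_(s' | Nset y B s') nu s * t x s s').

Lemma fwd_CM : complete_monotonicity p.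
Proof.
move=> A B A0 B0 x y xA yB.
pose g A' B' := \sum_(s | Lo s x == A') \sum_(s' | Lo s' y == B') nu s * t x s s'.
have Hsup : forall A' B' : {set X}, A \subset A' -> B \subset B' ->
    p x y A' B' = \sum_(A'' : {set X} | A' \subset A'') \sum_(B'' : {set X} | B' \subset B'') g A'' B''.
  move=> A' B' AA BB.
  have xA' : x \in A' := subsetP AA x xA.
  have yB' : y \in B' := subsetP BB y yB.
  rewrite (@Hp A' B' (nonempty_of xA') (nonempty_of yB') x y xA' yB') partition_Lo.
  apply: eq_bigr => A'' _; rewrite /g.
  rewrite (eq_bigr _ (fun s _ => partition_Lo (fun s' => nu s * t x s s') y B')).
  by rewrite exchange_big.
have -> : mobius p x y A B = g A B.
  rewrite mobius_mob; apply: (mobK1 (g := fun A'' => g A'' B)) => A' AA.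
  transitivity (mob (fun B' => \sum_(A'' : {set X} | A' \subset A'')
                   \sum_(B'' : {set X} | B' \subset B'') g A'' B'') B).
    by apply: eq_mob => B' BB; apply: Hsup.
  by rewrite mob_sumP; apply: eq_bigr => A'' _; apply: (mobK1 (g := g A'')).
by apply: sumr_ge0 => s _; apply: sumr_ge0 => s' _; apply: mulr_ge0.
Qed.

Lemma fwd_marg : marginality p.
Proof.
move=> A B C A0 B0 C0 x xA.
have key : forall B' : {set X}, B' != set0 ->
    \sum_(y in B') p x y A B' = \sum_(s | Nset x A s) nu s.
  move=> B' B0'.
  rewrite (eq_bigr _ (fun y yB => @Hp A B' A0 B0' x y xA yB)) exchange_big /=.
  apply: eq_bigr => s _.
  transitivity (\sum_(y in B') \sum_s' (Nset y B' s')%:R * (nu s * t x s s')).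
    apply: eq_bigr => y _; rewrite big_mkcond /=; apply: eq_bigr => s' _.
    by case: (Nset y B' s'); rewrite ?mul1r ?mul0r.
  rewrite exchange_big /=.
  under eq_bigr => s' _ do rewrite -mulr_suml uniq_max // mul1r.
  by rewrite -mulr_sumr tsum mulr1.
by rewrite !key.
Qed.

End Forward.

Section Backward.
Variables (R : realType) (X : finType) (p : X -> X -> {set X} -> {set X} -> R).
Hypotheses (Hr : is_rjcr p) (CM : complete_monotonicity p) (Marg : marginality p).

Definition p1 (x : X) (A : {set X}) : R := \sum_(y in [set: X]) p x y A setT.
Definition q1 (x : X) (A : {set X}) : R := mob (p1 x) A.
Definition qq (x y : X) (A B : {set X}) : R := mobius p x y A B.

Lemma marg1 x (A B : {set X}) : x \in A -> B != set0 -> \sum_(y in B) p x y A B = p1 x A.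
Proof.
move=> xA B0; apply: Marg => //; first exact: nonempty_of xA.
by apply/set0Pn; exists x; rewrite inE.
Qed.

Lemma qq_ge0 x y (A B : {set X}) : x \in A -> y \in B -> 0 <= qq x y A B.
Proof. move=> xA yB; apply: CM => //; [exact: nonempty_of xA | exact: nonempty_of yB]. Qed.

Lemma sumB_qq x y (A B : {set X}) :
  \sum_(B' : {set X} | B \subset B') qq x y A B' = mob (fun A' => p x y A' B) A.
Proof.
rewrite /qq; under eq_bigr do rewrite mobius_mob.
by rewrite -mob_sumP; apply: eq_mob => A' _; rewrite mobK2.
Qed.

Lemma sum_y_qq x (A B : {set X}) : x \in A -> B != set0 ->
  \sum_(y in B) \sum_(B' : {set X} | B \subset B') qq x y A B' = q1 x A.
Proof.
move=> xA B0; under eq_bigr do rewrite sumB_qq.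
rewrite -(mob_sumP (fun y => y \in B)); apply: eq_mob => A' AA.
by apply: marg1 => //; apply: (subsetP AA).
Qed.

Lemma setT_ne0 (x : X) : [set: X] != set0.
Proof. by apply/set0Pn; exists x; rewrite inE. Qed.

Lemma q1_ge0 x (A : {set X}) : x \in A -> 0 <= q1 x A.
Proof.
move=> xA; rewrite -(sum_y_qq xA (setT_ne0 x)).
apply: sumr_ge0 => y _; apply: sumr_ge0 => B' HB; apply: qq_ge0 => //.
by move: HB; rewrite subTset => /eqP ->; rewrite inE.
Qed.

Lemma q1_P (A : {set X}) : A != set0 ->
  \sum_(x in A) \sum_(A' : {set X} | A \subset A') q1 x A' = 1.
Proof.
move=> A0; under eq_bigr do rewrite /q1 mobK2.
have /set0Pn [x0 _] := A0.
by have [_ <-] := @Hr A setT A0 (setT_ne0 x0).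
Qed.

Definition r2 (x : X) (A : {set X}) (y : X) (B : {set X}) : R := qq x y A B / q1 x A.

Lemma r2_ge0 x (A : {set X}) : x \in A -> forall y (B : {set X}), y \in B -> 0 <= r2 x A y B.
Proof. by move=> xA y B yB; apply: divr_ge0; [apply: qq_ge0 | apply: q1_ge0]. Qed.

Lemma r2_P x (A : {set X}) : x \in A -> 0 < q1 x A -> forall B : {set X}, B != set0 ->
  \sum_(y in B) \sum_(B' : {set X} | B \subset B') r2 x A y B' = 1.
Proof.
move=> xA pos B B0; rewrite /r2.
under eq_bigr do rewrite -mulr_suml.
by rewrite -mulr_suml sum_y_qq // divff // lt0r_neq0.
Qed.

Definition Tk (x : X) (A : {set X}) : linord X -> R := if 0 < q1 x A then FNu (r2 x A) else FNu q1.

Lemma qG x y (A' B : {set X}) : x \in A' -> y \in B ->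
  q1 x A' * \sum_(s' | Nset y B s') Tk x A' s' = \sum_(B' : {set X} | B \subset B') qq x y A' B'.
Proof.
move=> xA yB; rewrite /Tk; case: ifP => pos.
  rewrite partition_Lo mulr_sumr; apply: eq_bigr => B' BB.
  rewrite (FNu_E (r2_ge0 xA) (r2_P xA pos)); last exact: (subsetP BB).
  by rewrite /r2 mulrC divfK // lt0r_neq0.
have q0 : q1 x A' = 0.
  by apply/eqP; rewrite eq_le q1_ge0 // andbT leNgt pos.
rewrite q0 mul0r.
have := sum_y_qq xA (nonempty_of yB); rewrite q0 => /eqP.
rewrite psumr_eq0 => [/allP H|y' y'B]; last first.
  by apply: sumr_ge0 => B' BB; apply: qq_ge0 => //; apply: (subsetP BB).
by have := H y (mem_index_enum _); rewrite yB => /implyP /(_ isT) /eqP ->.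
Qed.

Lemma bwd : cdru_consistent p.
Proof.
exists (FNu q1), (fun x s => Tk x (Lo s x)).
split; first by move=> s; apply: FNu_ge0 q1_ge0 _.
split; first by apply: FNu_sum q1_ge0 q1_P.
split.
  by move=> x s s'; rewrite /Tk; case: ifP => pos; apply: FNu_ge0; [apply: r2_ge0 | apply: q1_ge0]; rewrite setU11.
split.
  move=> x s; rewrite /Tk; case: ifP => pos; apply: FNu_sum.
  - by apply: r2_ge0; rewrite setU11.
  - by apply: r2_P; rewrite ?setU11.
  - exact: q1_ge0.
  - exact: q1_P.
move=> A B A0 B0 x y xA yB.
under eq_bigr => s _ do rewrite -mulr_sumr.
rewrite partition_Lo.
transitivity (\sum_(A' : {set X} | A \subset A') \sum_(B' : {set X} | B \subset B') qq x y A' B'); last first.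
  apply: eq_bigr => A' AA.
  rewrite -(qG (subsetP AA x xA) yB) -(FNu_E q1_ge0 q1_P (subsetP AA x xA)) mulr_suml.
  by apply: eq_bigr => s /eqP ->.
under eq_bigr do rewrite sumB_qq.
by rewrite mobK2.
Qed.

End Backward.

Theorem theorem5 (R : realType) (X : finType)
  (p : X -> X -> {set X} -> {set X} -> R) :
  is_rjcr p ->
  (cdru_consistent p <-> complete_monotonicity p /\ marginality p).
Proof.
move=> Hr; split.
  case=> nu [t [nu0 [nusum [t0 [tsum Hp]]]]].
  by split; [apply: (fwd_CM nu0 t0 Hp) | apply: (fwd_marg tsum Hp)].
by case=> CM Marg; apply: bwd.
Qed.
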